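(* Let $(\alpha_0,\beta_0)\in\Delta_K$, $(\alpha_n,\beta_n)=T^n(\alpha_0,\beta_0)$, $\varepsilon_n=\varepsilon(\alpha_n,\beta_n)$, and assume that there exist $m\ge0$ and $p\ge1$ with $(\alpha_m,\beta_m,\varepsilon_m)=(\alpha_{m+p},\beta_{m+p},\varepsilon_{m+p})$. Then, regarding a stepped surface as the (infinite) formal sum of its unit squares and extending the dual substitutions additively to such infinite sums, \[ \mathscr S(\bar{\bar\nu}(\alpha_0,\beta_0))=\Theta_{\varepsilon_0}\circ\Theta_{\varepsilon_1}\circ\cdots\circ\Theta_{\varepsilon_{m-1}}\big(\mathscr S(\bar{\bar\nu}(\alpha_m,\beta_m))\big), \] and $\mathscr S(\bar{\bar\nu}(\alpha_m,\beta_m))$ is a fixed point of $\Theta=\Theta_{\varepsilon_m}\Theta_{\varepsilon_{m+1}}\cdots\Theta_{\varepsilon_{m+p-1}}$: \[ \Theta\big(\mathscr S(\bar{\bar\nu}(\alpha_m,\beta_m))\big)=\mathscr S(\bar{\bar\nu}(\alpha_m,\beta_m)). \]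
   Context: Let $K\subset\mathbb{R}$ be a real cubic number field, $N=N_{K/\mathbb{Q}}$ its norm. Fix $r=p/q$ with $p,q$ positive coprime integers and $3\nmid p$. Let $\Delta_K=\{(\alpha,\beta)\in K^2:\ 1,\alpha,\beta \text{ linearly independent over }\mathbb{Q},\ \alpha,\beta>0,\ \alpha+\beta<1\}$ and $Ind=\{(i,j): i,j\in\{0,1,2\},\ i\neq j\}$. Let $\Delta=\{(x,y)\in\mathbb{R}^2: x,y\ge 0,\ x+y\le 1\}$ and $\triangle(1,2)=\{(x,y)\in\Delta: x\ge y\}$, $\triangle(2,1)=\{x\le y\}$, $\triangle(0,1)=\{2x+y-1\le 0\}$, $\triangle(1,0)=\{2x+y-1\ge 0\}$, $\triangle(0,2)=\{x+2y-1\le0\}$, $\triangle(2,0)=\{x+2y-1\ge 0\}$ (all subsets of $\Delta$). Maps $T_{(i,j)}:\triangle(i,j)\to\Delta$: $T_{(1,2)}(x,y)=(\frac{x-y}{1-y},\frac{y}{1-y})$, $T_{(2,1)}(x,y)=(\frac{x}{1-x},\frac{y-x}{1-x})$, $T_{(0,1)}(x,y)=(\frac{x}{1-x},\frac{y}{1-x})$, $T_{(1,0)}(x,y)=(\frac{2x+y-1}{x+y},\frac{y}{x+y})$, $T_{(0,2)}(x,y)=(\frac{x}{1-y},\frac{y}{1-y})$, $T_{(2,0)}(x,y)=(\frac{x}{x+y},\frac{x+2y-1}{x+y})$. For $(\alpha,\beta)\in\Delta_K$ put $\gamma=1-\alpha-\beta$ and $v_{\{1,2\}}=\frac{\alpha^r\beta^r}{|N(\alpha)N(\beta)|}$,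 $v_{\{0,1\}}=\frac{\alpha^r\gamma^r}{|N(\alpha)N(\gamma)|}$, $v_{\{0,2\}}=\frac{\beta^r\gamma^r}{|N(\beta)N(\gamma)|}$; the maximum is attained at a unique pair $\{i_0,j_0\}$. $\varepsilon(\alpha,\beta)$ is the ordered pair $(i,j)\in Ind$ with $\{i,j\}=\{i_0,j_0\}$ and $(\alpha,\beta)\in\triangle(i,j)$, and $T(\alpha,\beta)=T_{\varepsilon(\alpha,\beta)}(\alpha,\beta)$ (a map $\Delta_K\to\Delta_K$). For $(i,j)\in Ind$, $M_{(i,j)}=(m_{k\ell})_{0\le k,\ell\le2}$ with $m_{k\ell}=1$ if $k=\ell$ or $(k,\ell)=(i,j)$, and $0$ otherwise; $L_{(i,j)}:=M_{(j,i)}$. For $(\alpha,\beta)\in\Delta_K$, $\bar{\bar\nu}(\alpha,\beta)={}^t(1-\alpha-\beta,\alpha,\beta)$. Let $\bar{\bar e}_0,\bar{\bar e}_1,\bar{\bar e}_2$ be the standard basis of $\mathbb{R}^3$. A unit square $(\bar{\bar x},i^* )$ ($\bar{\bar x}\in\mathbb{Z}^3$, $i\in\{0,1,2\}$) is the set $\{\bar{\bar x}+t\bar{\bar e}_j+u\bar{\bar e}_k: t,u\in[0,1]\}$ with $\{i,j,k\}=\{0,1,2\}$. For $\bar{\bar a}\in\mathbb{R}^3_{>0}$ with $\mathbb{Q}$-linearly independent coordinates, the stepped surface is $\mathscr S(\bar{\bar a})=\{(\bar{\bar x},i^* ): \bar{\bar x}\in\mathbb{Z}^3, i\in\{0,1,2\},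 \langle\bar{\bar x},\bar{\bar a}\rangle>0,\ \langle\bar{\bar x}-\bar{\bar e}_i,\bar{\bar a}\rangle\le0\}$. For $(i,j)\in Ind$ the dual substitution $\Theta_{(i,j)}$ is defined on unit squares by $\Theta_{(i,j)}(\bar{\bar x},j^* )=(L_{(i,j)}^{-1}(\bar{\bar x}+\bar{\bar e}_i),i^* )+(L_{(i,j)}^{-1}\bar{\bar x},j^* )$ and $\Theta_{(i,j)}(\bar{\bar x},k^* )=(L_{(i,j)}^{-1}\bar{\bar x},k^* )$ for $k\neq j$, and extended additively to formal sums. *)

(* Defs.v *)
From HB Require Import structures.
From mathcomp Require Import all_boot all_order all_algebra all_field.
From mathcomp Require Import all_classical all_reals all_analysis.
Set Implicit Arguments. Unset Strict Implicit. Unset Printing Implicit Defensive.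
Import Order.TTheory GRing.Theory Num.Theory.
Local Open Scope ring_scope.
Local Open Scope classical_set_scope.

Definition ix0 : 'I_3 := @Ordinal 3 0 isT.
Definition ix1 : 'I_3 := @Ordinal 3 1 isT.
Definition ix2 : 'I_3 := @Ordinal 3 2 isT.

Definition normK (K : fieldExtType rat) (x : K) : rat :=
  \det (passmx.mxof (vbasis fullv) (vbasis fullv) (amull x)).

Section Dynamics.
Variables (R : realType) (K : fieldExtType rat) (sigma : {rmorphism K -> R}) (r : R).

Definition DeltaK (a b : K) : Prop :=
  free [:: 1; a; b] /\ 0 < sigma a /\ 0 < sigma b /\ sigma a + sigma b < 1.

Definition inDelta (x y : R) : bool := (0 <= x) && (0 <= y) && (x + y <= 1).
Definition tri (i j : 'I_3) (x y : R) : bool :=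
  inDelta x y &&
  match val i, val j with
  | 1, 2 => y <= x
  | 2, 1 => x <= y
  | 0, 1 => 2 * x + y - 1 <= 0
  | 1, 0 => 2 * x + y - 1 >= 0
  | 0, 2 => x + 2 * y - 1 <= 0
  | 2, 0 => x + 2 * y - 1 >= 0
  | _, _ => false
  end.

Definition Tij (i j : 'I_3) (x y : K) : K * K :=
  match val i, val j with
  | 1, 2 => ((x - y) / (1 - y), y / (1 - y))
  | 2, 1 => (x / (1 - x), (y - x) / (1 - x))
  | 0, 1 => (x / (1 - x), y / (1 - x))
  | 1, 0 => ((2 * x + y - 1) / (x + y), y / (x + y))
  | 0, 2 => (x / (1 - y), y / (1 - y))
  | 2, 0 => (x / (x + y), (x + 2 * y - 1) / (x + y))
  | _, _ => (x, y)
  end.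

Definition vv (u w : K) : R :=
  powR (sigma u) r * powR (sigma w) r / `| ratr (normK u * normK w) |.

(* epsilon(alpha,beta); the paper asserts the max is unique and that exactly one
   of the two ordered triangles contains (alpha,beta) on Delta_K; the fall-back
   branches below only matter in (non-occurring) ties *)
Definition eps (a b : K) : 'I_3 * 'I_3 :=
  let g := 1 - a - b in
  let v12 := vv a b in let v01 := vv a g in let v02 := vv b g in
  if (v01 < v12) && (v02 < v12) then
    (if tri ix1 ix2 (sigma a) (sigma b) then (ix1, ix2) else (ix2, ix1))
  else if v02 < v01 then
    (if tri ix0 ix1 (sigma a) (sigma b) then (ix0, ix1) else (ix1, ix0))
  else
    (if tri ix0 ix2 (sigma a) (sigma b) then (ix0, ix2) else (ix2, ix0)).

Definition Tmap (ab : K * K) : K * K :=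
  let e := eps ab.1 ab.2 in Tij e.1 e.2 ab.1 ab.2.

Definition Torbit (ab0 : K * K) (n : nat) : K * K := iter n Tmap ab0.
Definition epsn (ab0 : K * K) (n : nat) : 'I_3 * 'I_3 :=
  eps (Torbit ab0 n).1 (Torbit ab0 n).2.

Definition nu (ab : K * K) : 'cV[R]_3 :=
  \col_k (if val k == 0%N then 1 - sigma ab.1 - sigma ab.2
          else if val k == 1%N then sigma ab.1 else sigma ab.2).

End Dynamics.

Definition Square := ('cV[int]_3 * 'I_3)%type.

Definition evec (i : 'I_3) : 'cV[int]_3 := delta_mx i 0.

Definition Mmx (i j : 'I_3) : 'M[int]_3 :=
  \matrix_(k, l) ((k == l) || ((k == i) && (l == j)))%:R.
Definition Lmx (i j : 'I_3) : 'M[int]_3 := Mmx j i.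

Definition dotZR (R : realType) (x : 'cV[int]_3) (a : 'cV[R]_3) : R :=
  \sum_(k < 3) (x k 0)%:~R * a k 0.

Definition stepped (R : realType) (a : 'cV[R]_3) : set Square :=
  [set s | 0 < dotZR s.1 a /\ dotZR (s.1 - evec s.2) a <= 0].

(* Theta_(i,j) on a single unit square: a finite formal sum (list) of squares *)
Definition theta1 (e : 'I_3 * 'I_3) (s : Square) : seq Square :=
  let Li := invmx (Lmx e.1 e.2) in
  if s.2 == e.2 then [:: (Li *m (s.1 + evec e.1), e.1); (Li *m s.1, e.2)]
  else [:: (Li *m s.1, s.2)].

(* (possibly infinite) formal sums of unit squares, with multiplicities in \bar R *)
Definition fsum (R : realType) := Square -> \bar R.

Definition fsum_of (R : realType) (S : set Square) : fsum R :=
  fun s => ((\1_S s : R))%:E.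

Definition Theta (R : realType) (e : 'I_3 * 'I_3) (F : fsum R) : fsum R :=
  fun y => \esum_(s in [set: Square]) (F s * ((count_mem y (theta1 e s))%:R)%:E)%E.

Definition ThetaComp (R : realType) (es : seq ('I_3 * 'I_3)) (F : fsum R) : fsum R :=
  foldr (@Theta R) F es.

(* Main.v *)
Require Import Defs.
From HB Require Import structures.
From mathcomp Require Import all_boot all_order all_algebra all_field.
From mathcomp Require Import all_classical all_reals all_analysis.
From mathcomp Require Import ring lra.
Import Order.TTheory GRing.Theory Num.Theory.
Local Open Scope ring_scope.


Section Dot.
Variable R : realType.

Lemma dotZR_D (x y : 'cV[int]_3) (a : 'cV[R]_3) :
  dotZR (x + y) a = dotZR x a + dotZR y a.
Proof.
rewrite /dotZR -big_split /=; apply: eq_bigr => k _.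
by rewrite mxE intrD mulrDl.
Qed.

Lemma dotZR_N (x : 'cV[int]_3) (a : 'cV[R]_3) :
  dotZR (- x) a = - dotZR x a.
Proof.
rewrite /dotZR -sumrN; apply: eq_bigr => k _.
by rewrite mxE intrN mulNr.
Qed.

Lemma dotZR_B (x y : 'cV[int]_3) (a : 'cV[R]_3) :
  dotZR (x - y) a = dotZR x a - dotZR y a.
Proof. by rewrite dotZR_D dotZR_N. Qed.

Lemma dotZR_Z (z : int) (x : 'cV[int]_3) (a : 'cV[R]_3) :
  dotZR (z *: x) a = z%:~R * dotZR x a.
Proof.
rewrite /dotZR mulr_sumr; apply: eq_bigr => k _.
by rewrite mxE intrM mulrA.
Qed.

Lemma dotZR_e (k : 'I_3) (a : 'cV[R]_3) : dotZR (evec k) a = a k 0.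
Proof.
rewrite /dotZR (bigD1 k) //= big1 ?addr0.
  by rewrite /evec mxE !eqxx mul1r.
by move=> l /negbTE lk; rewrite /evec mxE lk /= mul0r.
Qed.

Lemma sum_pick (f : 'I_3 -> R) (i : 'I_3) :
  \sum_(k < 3) (k == i)%:R * f k = f i.
Proof.
rewrite (bigD1 i) //= big1 ?addr0 ?eqxx ?mul1r //.
by move=> l /negbTE ->; rewrite mul0r.
Qed.

Lemma dotZR_rel (w : 'cV[int]_3) (a a' : 'cV[R]_3) (c : R) (i j : 'I_3)
  (ha : forall k, a k 0 = c * (a' k 0 + (k == i)%:R * a' j 0)) :
  dotZR w a = c * (dotZR w a' + (w i 0)%:~R * a' j 0).
Proof.
rewrite /dotZR.
rewrite -[X in _ + X](sum_pick (fun k => (w k 0)%:~R * a' j 0)) -big_split /=.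
rewrite mulr_sumr; apply: eq_bigr => k _; rewrite ha; ring.
Qed.

End Dot.

Lemma Lmx_eq (i j : 'I_3) : i != j -> Lmx i j = 1%:M + delta_mx j i.
Proof.
move=> ij; apply/matrixP => k l; rewrite /Lmx /Mmx !mxE.
case: (eqVneq k l) => [<-|kl] /=.
  case: (eqVneq k j) => [->|kj] /=; first by rewrite eq_sym (negbTE ij) addr0.
  by rewrite addr0.
by rewrite add0r.
Qed.

Lemma Lmx_unit (i j : 'I_3) : i != j ->
  Lmx i j *m (1%:M - delta_mx j i) = 1%:M /\ Lmx i j \in unitmx.
Proof.
move=> ij; rewrite Lmx_eq //.
have e : (1%:M + delta_mx j i) *m (1%:M - delta_mx j i) = 1%:M :> 'M[int]_3.
  rewrite mulmxDl mulmxBr mulmxBr !mul1mx mulmx1 mul_delta_mx_cond.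
  rewrite (negbTE ij) mulr0n subr0.
  by rewrite subrK.
by split => //; case: (mulmx1_unit e).
Qed.

Lemma Lmx_mul (i j : 'I_3) (w : 'cV[int]_3) : i != j ->
  Lmx i j *m w = w + (w i 0) *: evec j.
Proof.
move=> ij; rewrite Lmx_eq // mulmxDl mul1mx; congr (_ + _).
apply/matrixP => k l; rewrite !mxE (bigD1 i) //= big1.
  rewrite !mxE eqxx andbT; rewrite (ord1 l). case: (k == j) => /=; rewrite ?mulr1 ?mul1r ?mulr0 ?mul0r ?addr0 //.
by move=> m /negbTE mi; rewrite mxE mi andbF mul0r.
Qed.


Lemma inv_eq (i j : 'I_3) (ij : i != j) (w u : 'cV[int]_3) :
  (invmx (Lmx i j) *m u == w) = (u == Lmx i j *m w).
Proof.
have [_ U] := @Lmx_unit i j ij.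
apply/eqP/eqP => [<-|->]; first by rewrite mulKVmx.
by rewrite mulKmx.
Qed.

Lemma evec_neq0 (i : 'I_3) : evec i != 0.
Proof.
apply/negP => /eqP/matrixP/(_ i 0); rewrite /evec !mxE !eqxx /=.
by move/eqP; rewrite oner_eq0.
Qed.

Lemma theta1_count (i j : 'I_3) (ij : i != j) (w : 'cV[int]_3) (k : 'I_3) (s : Square) :
  count_mem (w, k) (theta1 (i,j) s) =
  ((s == (Lmx i j *m w, k)) + ((k == i) && (s == ((Lmx i j *m w - evec i)%R, j))))%N.
Proof.
case: s => v t; rewrite /theta1 /=.
rewrite !xpair_eqE.
have E : (v == Lmx i j *m w - evec i) = (v + evec i == Lmx i j *m w).
  by rewrite eq_sym subr_eq eq_sym.
rewrite E.
have AB : ~~ ((v == Lmx i j *m w) && (v + evec i == Lmx i j *m w)).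
  apply/negP => /andP[/eqP e1 /eqP]; rewrite -e1 => /eqP.
  by rewrite -subr_eq0 addrC addKr (negbTE (evec_neq0 i)).
move: AB.
case: (eqVneq t j) => [->|tj] /=; rewrite !xpair_eqE !inv_eq // ?addn0 ?andbT ?andbF ?addn0.
  case: (v == _); case: (v + _ == _); rewrite //= ?andbF ?andbT ?addn0 => _.
all: by rewrite ?add0n ?(eq_sym i k).
Qed.

Lemma esum_pt (R : realType) (T : choiceType) (g : T -> \bar R) (t : T) :
  (forall s, (0 <= g s)%E) -> (forall s, s != t -> g s = 0%E) ->
  \esum_(s in [set: T]) g s = g t.
Proof.
move=> g0 gt; rewrite (esumID [set t]); last by move=> s _; exact: g0.
rewrite setTI esum_set1 // esum1 ?adde0 // => s [_ /= st].
by apply: gt; apply/eqP.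
Qed.

Arguments esum_pt {R T} g t.

Lemma stepped_in (R : realType) (a : 'cV[R]_3) (s : Square) :
  (s \in stepped a) = (0 < dotZR s.1 a) && (dotZR (s.1 - evec s.2) a <= 0).
Proof.
apply/idP/idP => [/set_mem [h1 h2]|/andP [h1 h2]]; first by apply/andP.
by apply/mem_set.
Qed.

Lemma theta_step (R : realType) (i j : 'I_3) (ij : i != j) (a a' : 'cV[R]_3)
  (c : R) (hc : 0 < c) (ha' : forall k, 0 <= a' k 0)
  (ha : forall k, a k 0 = c * (a' k 0 + (k == i)%:R * a' j 0)) :
  Theta (i,j) (fsum_of R (stepped a')) = fsum_of R (stepped a).
Proof.
apply: funext => -[w k]; rewrite /Theta /fsum_of.
under eq_esum do rewrite theta1_count // -EFinM natrD mulrDr EFinD.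
rewrite esumD; last first.
- by move=> s _; rewrite lee_fin mulr_ge0 // indicE.
- by move=> s _; rewrite lee_fin mulr_ge0 // indicE.
rewrite (esum_pt _ (Lmx i j *m w, k)); first last.
- by move=> s /negbTE ->; rewrite mulr0.
- by move=> s; rewrite lee_fin mulr_ge0 // indicE.
rewrite (esum_pt _ ((Lmx i j *m w - evec i)%R, j)); first last.
- by move=> s /negbTE ->; rewrite andbF mulr0.
- by move=> s; rewrite lee_fin mulr_ge0 // indicE.
rewrite !eqxx andbT mulr1 -EFinD; congr EFin.
rewrite !indicE !stepped_in /=.
set p := dotZR (Lmx i j *m w) a'.
have hp : dotZR w a = c * p.
  by rewrite /p Lmx_mul // dotZR_D dotZR_Z dotZR_e (dotZR_rel _ w _ _ _ _ _ ha).
rewrite !dotZR_B hp !dotZR_e -/p ha pmulr_rgt0 // -mulrBr pmulr_rle0 //.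
have hi := ha' i; have hj := ha' j.
case: (eqVneq k i) => [->|ki] /=; last first.
  by rewrite mulr0 addr0 mul0r addr0.
rewrite mulr1 mul1r.
have [hY|hY] := lerP p (a' i 0).
  have -> : (0 < p - a' i 0) = false by apply/negbTE; rewrite -leNgt; lra.
  have -> : (p - a' i 0 <= 0) = true by apply/idP; lra.
  have -> : (p - (a' i 0 + a' j 0) <= 0) = true by apply/idP; lra.
  by rewrite /= addr0.
have -> : (p - a' i 0 <= 0) = false by apply/negbTE; rewrite -ltNge; lra.
have -> : (0 < p) = true by apply/idP; lra.
have -> : (0 < p - a' i 0) = true by apply/idP; lra.
by rewrite /= add0r opprD addrA.
Qed.


Section Dyn.
Variables (R : realType) (K : fieldExtType rat) (sigma : {rmorphism K -> R}) (r : R).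

Lemma core (ab : K * K) (e : 'I_3 * 'I_3)
  (h0 : 0 <= 1 - sigma ab.1 - sigma ab.2) (h1 : 0 <= sigma ab.1) (h2 : 0 <= sigma ab.2)
  (ht : tri e.1 e.2 (sigma ab.1) (sigma ab.2)) :
  e.1 != e.2 /\ exists2 c, 0 < c &
    nu sigma ab e.2 0 <= nu sigma ab e.1 0 /\
    forall k, nu sigma ab k 0 = c * (nu sigma (Tij e.1 e.2 ab.1 ab.2) k 0
                 + (k == e.1)%:R * nu sigma (Tij e.1 e.2 ab.1 ab.2) e.2 0).
Proof.
case: ab h0 h1 h2 ht => a b /=.
set x := sigma a; set y := sigma b => h0 h1 h2.
case: e => [[[|[|[|i]]] pi] [[|[|[|j]]] pj]] //=; rewrite /tri /inDelta /= => /andP[_ ht].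
all: split => //; rewrite /Tij /=.
1: exists (1 - x); first lra.
2: exists (1 - y); first lra.
3: exists (x + y); first lra.
4: exists (1 - y); first lra.
5: exists (x + y); first lra.
6: exists (1 - x); first lra.
all: split; first by rewrite !mxE /=; lra.
all: move=> [[|[|[|k]]] pk] //; rewrite !mxE /=.
all: rewrite ?(fmorphV, rmorphB, rmorphD, rmorphM, rmorph1, rmorph_nat) -/x -/y.
all: field; apply/negP => /eqP; lra.
Qed.
End Dyn.

Set Implicit Arguments. Unset Strict Implicit.

Section Dyn2.
Variables (R : realType) (K : fieldExtType rat) (sigma : {rmorphism K -> R}) (r : R).

Lemma eps_tri (a b : K) (h : inDelta (sigma a) (sigma b)) :
  tri (eps sigma r a b).1 (eps sigma r a b).2 (sigma a) (sigma b).
Proof.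
rewrite /eps.
case: ifP => _; [|case: ifP => _]; case: ifP => //;
  rewrite /tri h /= => /negbT; rewrite -ltNge => H; lra.
Qed.

Lemma nonneg_rel (i j : 'I_3) (ij : i != j) (v v' : 'cV[R]_3) (c : R) (hc : 0 < c)
  (hv : forall k, 0 <= v k 0) (hle : v j 0 <= v i 0)
  (rel : forall k, v k 0 = c * (v' k 0 + (k == i)%:R * v' j 0)) :
  forall k, 0 <= v' k 0.
Proof.
have hj := rel j; rewrite eq_sym (negbTE ij) mul0r addr0 in hj.
move=> k; case: (eqVneq k i) => [->|ki].
  have hi := rel i; rewrite eqxx mul1r in hi.
  rewrite -(pmulr_rge0 _ hc).
  have -> : c * v' i 0 = v i 0 - v j 0 by rewrite hi hj; ring.
  by rewrite subr_ge0.
have hk := rel k; rewrite (negbTE ki) mul0r addr0 in hk.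
by rewrite -(pmulr_rge0 _ hc) -hk.
Qed.

Lemma nu_step (ab : K * K) (hnn : forall k, 0 <= nu sigma ab k 0) :
  (eps sigma r ab.1 ab.2).1 != (eps sigma r ab.1 ab.2).2 /\
  (forall k, 0 <= nu sigma (Tmap sigma r ab) k 0) /\
  exists2 c, 0 < c & forall k, nu sigma ab k 0 =
     c * (nu sigma (Tmap sigma r ab) k 0
          + (k == (eps sigma r ab.1 ab.2).1)%:R
            * nu sigma (Tmap sigma r ab) (eps sigma r ab.1 ab.2).2 0).
Proof.
have h0 := hnn ix0; have h1 := hnn ix1; have h2 := hnn ix2.
rewrite !mxE /= in h0 h1 h2.
have hD : inDelta (sigma ab.1) (sigma ab.2).
  rewrite /inDelta h1 h2 /=; lra.
have ht := @eps_tri ab.1 ab.2 hD.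
have [ne [c hc [hle rel]]] := @core _ _ _ _ _ h0 h1 h2 ht.
rewrite /Tmap /=; split => //; split; last by exists c.
exact: (@nonneg_rel _ _ ne _ _ _ hc hnn hle rel).
Qed.

Lemma orbit_inv (ab0 : K * K) (h : forall k, 0 <= nu sigma ab0 k 0) n :
  forall k, 0 <= nu sigma (Torbit sigma r ab0 n) k 0.
Proof.
elim: n => [|n IH] //.
rewrite /Torbit iterS -/(Torbit sigma r ab0 n).
by have [_ [H _]] := nu_step IH.
Qed.

Lemma orbit_comp (ab0 : K * K) (h : forall k, 0 <= nu sigma ab0 k 0) s l :
  ThetaComp [seq epsn sigma r ab0 n | n <- iota s l]
    (fsum_of R (stepped (nu sigma (Torbit sigma r ab0 (s + l)))))
  = fsum_of R (stepped (nu sigma (Torbit sigma r ab0 s))).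
Proof.
elim: l s => [|l IH] s; first by rewrite addn0.
rewrite /= -addSnnS.
rewrite /ThetaComp /= -/(ThetaComp _ _) IH.
have [ne [_ [c hc rel]]] := nu_step (orbit_inv h s).
have -> : Torbit sigma r ab0 s.+1 = Tmap sigma r (Torbit sigma r ab0 s)
  by rewrite /Torbit iterS.
rewrite /epsn.
move: ne rel; case: (eps _ _ _ _) => i j /= ne rel.
apply: (@theta_step R i j ne _ _ c hc) => //; exact: (orbit_inv h s.+1).
Qed.
End Dyn2.

Unset Implicit Arguments. Set Strict Implicit.


Theorem corollary5p6 (R : realType) (K : fieldExtType rat)
  (sigma : {rmorphism K -> R}) (hK : \dim {:K} = 3%N)
  (pr qr : nat) (hpr : (0 < pr)%N) (hqr : (0 < qr)%N)
  (hcop : coprime pr qr) (h3 : ~~ (3 %| pr)%N)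
  (a0 b0 : K) (h0 : DeltaK sigma a0 b0)
  (m k : nat) (hk : (1 <= k)%N)
  (hper : Torbit sigma (pr%:R / qr%:R) (a0, b0) m
            = Torbit sigma (pr%:R / qr%:R) (a0, b0) (m + k)
          /\ epsn sigma (pr%:R / qr%:R) (a0, b0) m
            = epsn sigma (pr%:R / qr%:R) (a0, b0) (m + k)) :
  fsum_of R (stepped (nu sigma (a0, b0)))
    = ThetaComp [seq epsn sigma (pr%:R / qr%:R) (a0, b0) n | n <- iota 0 m]
        (fsum_of R (stepped (nu sigma (Torbit sigma (pr%:R / qr%:R) (a0, b0) m))))
  /\
  ThetaComp [seq epsn sigma (pr%:R / qr%:R) (a0, b0) n | n <- iota m k]
      (fsum_of R (stepped (nu sigma (Torbit sigma (pr%:R / qr%:R) (a0, b0) m))))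
    = fsum_of R (stepped (nu sigma (Torbit sigma (pr%:R / qr%:R) (a0, b0) m))).
Proof.
have h : forall k, 0 <= nu sigma (a0, b0) k 0.
  case: h0 => _ [ha [hb hab]] [[|[|[|?]]] ?] //; rewrite mxE /=; lra.
split.
  by have := orbit_comp (pr%:R / qr%:R : R) h 0 m; rewrite add0n /= => <-.
have := orbit_comp (pr%:R / qr%:R : R) h m k.
by rewrite -(proj1 hper).
Qed.
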